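(* Let $k$ be an algebraically closed field, let $n\ge 1$ and $1\le g\le n$. Let $K$ be the quiver with vertices $0,1,\dots,n$ and arrows $\beta_x: x\to x+1$ for $0\le x\le g-1$ and $\alpha_x: x+1\to x$ for $g\le x\le n$, where vertex indices are read modulo $n+1$ (so $\alpha_n:0\to n$). For integers $p\le q$ let $V_{(p,q)}\in\operatorname{rep}K$ be the representation defined in the context, and for $V\in\operatorname{rep}K$ let $\overline V\in\operatorname{rep}K$ be the representation defined in the context (dualize, then relabel vertices by the permutation $G$). Let $p,q\in\mathbb Z$ with $p\le q$, and let $p',q'\in\mathbb Z$ satisfy $p'\equiv Gq \pmod{n+1}$, $q'\equiv Gp\pmod{n+1}$ and $q'-p'=q-p$. Then there is an isomorphism of representations $\overline{V_{(p,q)}}\cong V_{(p',q')}$.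
   Context: Representations of $K$ are finite-dimensional: a $k$-vector space $V(x)$ at each vertex and a linear map $V(\gamma):V(x)\to V(y)$ for each arrow $\gamma:x\to y$; morphisms are families of linear maps commuting with all arrow maps; $\operatorname{rep}K$ denotes this category. Interval representations: for $0\le p\le n$ and $q\ge p$, let $E$ have basis $e_p,\dots,e_q$ and set $V_{(p,q)}(x)=\bigoplus_{p\le i\le q,\ i\equiv x \ (\mathrm{mod}\ n+1)} k e_i$. For $0\le x\le g-1$, $V_{(p,q)}(\beta_x)$ sends $e_i$ (with $i\equiv x$) to $e_{i+1}$ if $i<q$ and to $0$ if $i=q$. For $g\le x\le n$, $V_{(p,q)}(\alpha_x)$ sends $e_i$ (with $i\equiv x+1$) to $e_{i-1}$ if $i>p$ and to $0$ if $i=p$. For arbitrary $p\in\mathbb Z$ and $q\ge p$, set $V_{(p,q)}:=V_{(p_0,q+p_0-p)}$ where $p_0\in\{0,\dots,n\}$, $p_0\equiv p \pmod{n+1}$. The permutation $G$ of $\{0,\dots,n\}$: $Gx=g-x$ for $0\le x\le g$ and $Gx=n+g+1-x$ for $g+1\le x\le n$; it is extended to $\mathbb Z$ by $Gz:=G(z\bmod (n+1))$ with $z\bmod(n+1)\in\{0,\dots,n\}$. For every arrow $\gamma:x\to y$ of $K$ there is an arrow $G\gamma: Gy\to Gx$ of $K$. For $V\in\operatorname{rep}K$ define $\overline V\in \operatorname{rep} K$ by $\overline V(x)=V(Gx)^*$ (dual space) for each vertex $x$ and, for each arrow $\gamma:x\to y$ of $K$, $\overline V(G\gamma)=V(\gamma)^*:V(y)^*\to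 V(x)^*$ (the dual map), which is a map $\overline V(Gy)\to\overline V(Gx)$. *)

(* Defs.v *)
From HB Require Import structures.
From mathcomp Require Import all_boot all_order all_algebra.
From mathcomp Require Import zify.
Set Implicit Arguments. Unset Strict Implicit. Unset Printing Implicit Defensive.
Import Order.TTheory GRing.Theory Num.Theory.

(* The quiver K with vertices 0..n (type 'I_n.+1) and n+1 arrows, also
   indexed by 'I_n.+1: arrow a is beta_a : a -> a+1 if a < g, and
   alpha_a : a+1 -> a if g <= a (indices mod n+1). *)
Section Quiver.
Variables (n g : nat).

Definition vsucc (x : 'I_n.+1) : 'I_n.+1 := inord (x.+1 %% n.+1).
Definition src (a : 'I_n.+1) : 'I_n.+1 := if a < g then a else vsucc a.
Definition tgt (a : 'I_n.+1) : 'I_n.+1 := if a < g then vsucc a else a.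

(* The permutation G on vertices, and the induced map on arrows
   (G beta_a = beta_(g-1-a), G alpha_a = alpha_(n+g-a)). *)
Definition Gnat (x : nat) : nat := if x <= g then g - x else n + g + 1 - x.
Definition Gv (x : 'I_n.+1) : 'I_n.+1 := inord (Gnat x).
Definition Ga (a : 'I_n.+1) : 'I_n.+1 :=
  inord (if (a < g)%N then g - 1 - a else n + g - a).

Lemma inordE (m : nat) : nat_of_ord (@inord n m) = if m <= n then m else 0.
Proof.
case: (leqP m n) => h; first by rewrite inordK.
by rewrite /inord /insubd insubF //; apply/negbTE; rewrite -leqNgt.
Qed.

Lemma vsuccE (x : 'I_n.+1) : nat_of_ord (vsucc x) = if nat_of_ord x == n then 0 else x.+1.
Proof.
rewrite /vsucc inordE; have := ltn_ord x.
case: eqP => hx hlt.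
  by rewrite hx modnn.
rewrite modn_small; last by lia.
by rewrite ifT //; lia.
Qed.

Ltac crunch :=
  repeat (rewrite ?(fun_if (@nat_of_ord n.+1)) ?vsuccE ?inordE);
  repeat match goal with |- context [if ?c then _ else _] =>
    lazymatch c with
    | context [if _ then _ else _] => fail
    | _ => case: (boolP c) => ? /=
    end end;
  lia.

Lemma tgt_Ga (hg : g <= n) (a : 'I_n.+1) : tgt (Ga a) = Gv (src a).
Proof.
apply: ord_inj; have := ltn_ord a => ha.
rewrite /tgt /src /Ga /Gv /Gnat /=.
crunch.
Qed.

Lemma src_Ga (hg : g <= n) (a : 'I_n.+1) : src (Ga a) = Gv (tgt a).
Proof.
apply: ord_inj; have := ltn_ord a => ha.
rewrite /tgt /src /Ga /Gv /Gnat /=.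
crunch.
Qed.

End Quiver.

(* A finite-dimensional representation of K over k, in coordinates:
   V(x) = k^(rdim x) (row vectors), V(a) : k^(rdim (src a)) -> k^(rdim (tgt a))
   given by v |-> v *m rmap a. *)
Record rep (k : fieldType) (n g : nat) := Rep {
  rdim : 'I_n.+1 -> nat;
  rmap : forall a : 'I_n.+1, 'M[k]_(rdim (@src n g a), rdim (@tgt n g a))
}.

Section Reps.
Variables (k : fieldType) (n g : nat).
Local Open Scope ring_scope.

Definition rep_morph (V W : rep k n g)
  (f : forall x : 'I_n.+1, 'M[k]_(rdim V x, rdim W x)) : Prop :=
  forall a : 'I_n.+1, rmap V a *m f (@tgt n g a) = f (@src n g a) *m rmap W a.

Definition rep_iso (V W : rep k n g) : Prop :=
  exists f : forall x : 'I_n.+1, 'M[k]_(rdim V x, rdim W x),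
  exists h : forall x : 'I_n.+1, 'M[k]_(rdim W x, rdim V x),
    rep_morph f /\
    forall x : 'I_n.+1, f x *m h x = 1%:M /\ h x *m f x = 1%:M.

(* The interval representation V_(p,q) for natural p <= q: basis e_p..e_q,
   V(x) spanned by the e_i with i = x mod n+1 (in increasing order of i). *)
Definition ivl_elems (p q : nat) (x : 'I_n.+1) : seq nat :=
  [seq i <- iota p (q - p).+1 | (i %% n.+1)%N == x].

Definition ivl_dim (p q : nat) (x : 'I_n.+1) : nat := size (ivl_elems p q x).

(* beta_a : e_i |-> e_(i+1) (0 if i = q);  alpha_a : e_i |-> e_(i-1) (0 if i = p) *)
Definition ivl_map (p q : nat) (a : 'I_n.+1) :
  'M[k]_(ivl_dim p q (@src n g a), ivl_dim p q (@tgt n g a)) :=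
  \matrix_(j, j')
    (if (a < g)%N then
       (nth 0%N (ivl_elems p q (@src n g a)) j).+1
         == nth 0%N (ivl_elems p q (@tgt n g a)) j'
     else
       nth 0%N (ivl_elems p q (@src n g a)) j
         == (nth 0%N (ivl_elems p q (@tgt n g a)) j').+1)%:R.

Definition Vnat (p q : nat) : rep k n g := Rep (ivl_map p q).

Definition Vint (p q : int) : rep k n g :=
  let p0 := absz (p %% n.+1)%Z in
  Vnat p0 (absz (q - p + p0%:Z)).

(* The dual representation \overline V: \overline V(x) = V(Gx)^*, and
   \overline V(G gamma) = V(gamma)^* (the dual of v |-> v *m M is given, in
   dual bases, by the transpose).  Since G is an involution on arrows,
   \overline V(b) = V(G b)^*. *)
Definition rep_dual (hg : (g <= n)%N) (V : rep k n g) : rep k n g :=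
  @Rep k n g (fun x => rdim V (@Gv n g x))
    (fun b => castmx (f_equal (rdim V) (tgt_Ga hg b),
                      f_equal (rdim V) (src_Ga hg b)) (rmap V (@Ga n g b))^T).

End Reps.

Definition Gz (n g : nat) (z : int) : nat := Gnat n g (absz (z %% n.+1)%Z).

(* Main.v *)
Require Import Defs.
From HB Require Import structures.
From mathcomp Require Import all_boot all_order all_algebra.
From mathcomp Require Import zify ring.
Import Order.TTheory GRing.Theory Num.Theory.

Module Aux.
Set Implicit Arguments. Unset Strict Implicit. Unset Printing Implicit Defensive.

Local Open Scope ring_scope.
Section Aux.
Variables (n g : nat).
Local Open Scope nat_scope.

Lemma mem_ivl (p q : nat) (x : 'I_n.+1) i : p <= q ->
  (i \in ivl_elems p q x) = (p <= i <= q) && (i %% n.+1 == x).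
Proof.
move=> hpq; rewrite mem_filter mem_iota andbC; congr (_ && _).
apply/idP/idP => /andP[h1 h2]; apply/andP; split => //; lia.
Qed.

Lemma uniq_ivl (p q : nat) (x : 'I_n.+1) : uniq (ivl_elems p q x).
Proof. exact: filter_uniq (iota_uniq _ _). Qed.

Lemma Gv_mod (hg : g <= n) (x : 'I_n.+1) : (x + Gv g x) %% n.+1 = g.
Proof.
have hx := ltn_ord x.
rewrite /Gv /Gnat inordE.
case: (leqP x g) => h.
  rewrite ifT; last lia.
  rewrite modn_small; lia.
rewrite ifT; last lia.
have -> : x + (n + g + 1 - x) = g + n.+1 by lia.
rewrite modnDr modn_small; lia.
Qed.

Lemma submod (c a x y : nat) : a <= c -> c %% n.+1 = g -> a %% n.+1 = y ->
  (x + y) %% n.+1 = g -> x < n.+1 -> (c - a) %% n.+1 = x.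
Proof.
move=> hac hc ha hxy hx.
have : (c - a + y == x + y %[mod n.+1]).
  by rewrite hxy -ha modnDmr subnK // hc.
by rewrite eqn_modDr (modn_small hx) => /eqP.
Qed.

Local Open Scope ring_scope.
Lemma sum_ind (k : fieldType) (s : seq nat) y (P : pred nat) : uniq s ->
  \sum_(m < size s) ((nth 0 s m == y)%:R * (P (nth 0 s m))%:R : k)
  = ((y \in s) && P y)%:R.
Proof.
rewrite -(big_mkord xpredT (fun m => ((nth 0 s m == y)%:R * (P (nth 0 s m))%:R : k))).
rewrite -(big_nth 0 xpredT (fun m => ((m == y)%:R * (P m)%:R : k))).
elim: s => [|a s IH] /=; first by rewrite big_nil.
move=> /andP[ha hu]; rewrite big_cons IH // in_cons.
case: (eqVneq a y) => [<-|hay] /=.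
  by rewrite (negbTE ha) /= mul1r addr0.
by rewrite mul0r add0r.
Qed.

End Aux.

Lemma Ga_lt (n g : nat) (hg1 : (1 <= g)%N) (hg : (g <= n)%N) (b : 'I_n.+1) :
  (Ga g b < g)%N = (b < g)%N.
Proof.
have hb := ltn_ord b.
rewrite /Ga inordE.
case: (ltnP b g) => h.
  rewrite ifT; lia.
rewrite ifT; lia.
Qed.

Lemma Gnat_sum (n g : nat) (hg : (g <= n)%N) (x : nat) : (x < n.+1)%N ->
  (x + Gnat n g x = g \/ x + Gnat n g x = g + n.+1)%N.
Proof. move=> hx; rewrite /Gnat; case: (leqP x g) => h; lia. Qed.

Lemma dvd_mod (N m : int) : (modz m N - m) \in dvdz N.
Proof.
apply/dvdzP; exists (- divz m N).
have h := divz_eq m N.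
move: h; set r := modz m N; set d := divz m N => h.
by rewrite [X in _ - X]h; ring.
Qed.

Section B.
Local Open Scope ring_scope.

Lemma main_iso (k : fieldType) (n g : nat) (hg1 : (1 <= g)%N) (hg : (g <= n)%N)
  (p0 p0' L : nat) (hc : ((p0 + p0' + L) %% n.+1)%N = g) :
  rep_iso (rep_dual hg (Vnat k n g p0 (L + p0))) (Vnat k n g p0' (L + p0')).
Proof.
set c := (p0 + p0' + L)%N.
pose A x := ivl_elems (n:=n) p0 (L + p0) x.
pose B x := ivl_elems (n:=n) p0' (L + p0') x.
have memA : forall x i, (i \in A x) = (p0 <= i <= L + p0)%N && (i %% n.+1 == x)%N.
  by move=> x i; apply: mem_ivl; lia.
have memB : forall x i, (i \in B x) = (p0' <= i <= L + p0')%N && (i %% n.+1 == x)%N.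
  by move=> x i; apply: mem_ivl; lia.
have AB : forall x i, i \in A (Gv g x) -> (c - i)%N \in B x.
  move=> x i; rewrite memA memB => /andP[h1 /eqP h2].
  apply/andP; split; first lia.
  apply/eqP; apply: (submod (g := g) (y := Gv g x)) => //; first lia.
  exact: (Gv_mod hg x).
have BA : forall x u, u \in B x -> (c - u)%N \in A (Gv g x).
  move=> x u; rewrite memA memB => /andP[h1 /eqP h2].
  apply/andP; split; first lia.
  apply/eqP; apply: (submod (g := g) (y := x)) => //; first lia.
  by rewrite addnC; exact: (Gv_mod hg x).
have Ac : forall x i, i \in A x -> (i <= c)%N.
  by move=> x i; rewrite memA => /andP[/andP[_ h] _]; lia.
have Bc : forall x i, i \in B x -> (i <= c)%N.
  by move=> x i; rewrite memB => /andP[/andP[_ h] _]; lia.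
pose f (x : 'I_n.+1) : 'M[k]_(ivl_dim p0 (L + p0) (Gv g x), ivl_dim p0' (L + p0') x) :=
  \matrix_(j, j') ((c - nth 0%N (A (Gv g x)) j)%N == nth 0%N (B x) j')%:R.
have nthA : forall x (j : 'I_(ivl_dim p0 (L + p0) x)), nth 0%N (A x) j \in A x.
  by move=> x j; apply: mem_nth.
have nthB : forall x (j : 'I_(ivl_dim p0' (L + p0') x)), nth 0%N (B x) j \in B x.
  by move=> x j; apply: mem_nth.
have sumA : forall x y (P : pred nat), \sum_(m < ivl_dim p0 (L+p0) x)
   ((nth 0%N (A x) m == y)%:R * (P (nth 0%N (A x) m))%:R : k) = ((y \in A x) && P y)%:R.
  by move=> x y P; apply: sum_ind; apply: uniq_ivl.
have sumB : forall x y (P : pred nat), \sum_(m < ivl_dim p0' (L+p0') x)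
   ((nth 0%N (B x) m == y)%:R * (P (nth 0%N (B x) m))%:R : k) = ((y \in B x) && P y)%:R.
  by move=> x y P; apply: sum_ind; apply: uniq_ivl.
exists f; exists (fun x => (f x)^T); split.
  move=> b; apply/matrixP => j j'; rewrite !mxE /=.
  under eq_bigr => j0 _ do rewrite castmxE !mxE /=.
  under [RHS]eq_bigr => j0 _ do rewrite !mxE /=.
  rewrite (src_Ga hg) (tgt_Ga hg) (Ga_lt hg1 hg).
  set i := nth 0%N (ivl_elems p0 (L + p0) (Gv g (src g b))) j.
  set u := nth 0%N (ivl_elems p0' (L + p0') (tgt g b)) j'.
  have hi : (i <= c)%N := Ac _ _ (nthA _ j).
  have hu : (u <= c)%N := Bc _ _ (nthB _ j').
  have swapA : forall y (j0 : 'I_(ivl_dim p0 (L+p0) y)) v, (v <= c)%N ->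
    ((c - nth 0%N (A y) j0)%N == v) = (nth 0%N (A y) j0 == (c - v)%N).
    move=> y j0 v hv; have h0 : (nth 0%N (A y) j0 <= c)%N := Ac _ _ (nthA _ j0).
    by apply/idP/idP => /eqP h; apply/eqP; lia.
  under eq_bigr => j0 _ do rewrite swapA // mulrC.
  rewrite (sumA _ (c - u)%N (fun m => if (b<g)%N then m.+1 == i else m == i.+1)) BA ?nthB //=.
  under [RHS]eq_bigr => j0 _ do rewrite eq_sym.
  rewrite (sumB _ (c - i)%N (fun m => if (b<g)%N then m.+1 == u else m == u.+1)) AB ?nthA //=.
  case: ifP => _.
    have -> : ((c - u).+1 == i) = ((c - i).+1 == u) by apply/idP/idP => /eqP h; apply/eqP; lia.
    by [].
  have -> : ((c - u)%N == i.+1) = ((c - i)%N == u.+1) by apply/idP/idP => /eqP h; apply/eqP; lia.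
  by [].
move=> x; split; apply/matrixP => j j2; rewrite /f !mxE.
  set a := nth 0%N (A (Gv g x)) j; set a2 := nth 0%N (A (Gv g x)) j2.
  under eq_bigr => j0 _ do rewrite !mxE eq_sym.
  rewrite (sum_ind k (s:=B x) (c - a)%N (fun m => (c - a2)%N == m)) ?uniq_ivl // AB ?nthA //=.
  have ha : (a <= c)%N := Ac _ _ (nthA (Gv g x) j).
  have ha2 : (a2 <= c)%N := Ac _ _ (nthA (Gv g x) j2).
  have -> : ((c - a2)%N == (c - a)%N) = (a2 == a) by apply/eqP/eqP => h; lia.
  by rewrite /a /a2 nth_uniq ?uniq_ivl // eq_sym.
set b := nth 0%N (B x) j; set b2 := nth 0%N (B x) j2.
under eq_bigr => j0 _ do rewrite !mxE.
have hb : (b <= c)%N := Bc _ _ (nthB x j).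
have hb2 : (b2 <= c)%N := Bc _ _ (nthB x j2).
rewrite (eq_bigr (fun j0 : 'I_(ivl_dim p0 (L + p0) (Gv g x)) =>
   ((nth 0%N (A (Gv g x)) j0 == (c - b)%N)%:R * ((c - b2)%N == nth 0%N (A (Gv g x)) j0)%:R)));
  last first.
  move=> j0 _; have h0 : (nth 0%N (A (Gv g x)) j0 <= c)%N := Ac _ _ (nthA _ j0).
  move: h0; set a0 := nth _ (A (Gv g x)) j0 => h0; rewrite -/b -/b2.
  by congr (_%:R * _%:R); apply: f_equal; apply/idP/idP => /eqP h; apply/eqP; lia.
rewrite (sumA (Gv g x) (c - b)%N (fun m => (c - b2)%N == m)) BA ?nthB //=.
have -> : ((c - b2)%N == (c - b)%N) = (b2 == b) by apply/eqP/eqP => h; lia.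
by rewrite /b /b2 nth_uniq ?uniq_ivl // eq_sym.
Qed.

End B.
End Aux.
Import Aux.

Theorem mainTheorem1 (k : closedFieldType) (n g : nat)
  (hn : (1 <= n)%N) (hg1 : (1 <= g)%N) (hg : (g <= n)%N)
  (p q p' q' : int) :
  (p <= q)%R ->
  (p' = (Gz n g q)%:Z %[mod n.+1])%Z ->
  (q' = (Gz n g p)%:Z %[mod n.+1])%Z ->
  (q' - p')%R = (q - p)%R ->
  rep_iso (rep_dual hg (Vint k n g p q)) (Vint k n g p' q').
Proof.
move=> hpq hp' _ hL.
rewrite /Vint.
have hN : (Posz n.+1 != 0)%R by [].
set p0 := absz (p %% n.+1)%Z; set p0' := absz (p' %% n.+1)%Z.
have e0 : Posz p0 = (p %% n.+1)%Z by rewrite /p0 gez0_abs // modz_ge0.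
have e0' : Posz p0' = (p' %% n.+1)%Z by rewrite /p0' gez0_abs // modz_ge0.
set L := absz (q - p).
have eL : Posz L = (q - p)%R by rewrite /L gez0_abs // subr_ge0.
have -> : absz (q - p + Posz p0)%R = (L + p0)%N.
  by rewrite -eL -PoszD.
have -> : absz (q' - p' + Posz p0')%R = (L + p0')%N.
  by rewrite hL -eL -PoszD.
apply: main_iso => //.
suffices H : modz (Posz (p0 + p0' + L)) (Posz n.+1) = Posz g.
  by move: H; rewrite modz_nat => -[].
rewrite !PoszD e0 e0' eL.
rewrite -[RHS](@modz_small (Posz g) (Posz n.+1)); last by apply/andP; split; lia.
apply/eqP; rewrite eqz_mod_dvd.
have hpd : (p' - Posz (Gz n g q))%R \in dvdz (Posz n.+1) by rewrite -eqz_mod_dvd; apply/eqP.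
move: hpd; rewrite /Gz.
set qm := absz (q %% n.+1)%Z => hpd.
have eq : Posz qm = (q %% n.+1)%Z by rewrite /qm gez0_abs // modz_ge0.
have hqm : (qm < n.+1)%N.
  have : (Posz qm < Posz n.+1)%R by rewrite eq; apply: ltz_pmod.
  by [].
have hG : (Posz (Gnat n g qm) + Posz qm - Posz g)%R \in dvdz (Posz n.+1).
  case: (Gnat_sum hg hqm) => h.
    have -> : (Posz (Gnat n g qm) + Posz qm - Posz g)%R = 0%R by lia.
    exact: dvdz0.
  have -> : (Posz (Gnat n g qm) + Posz qm - Posz g)%R = Posz n.+1 by lia.
  exact: dvdzz.
have -> : ((p %% n.+1)%Z + (p' %% n.+1)%Z + (q - p) - Posz g)%R =
  ((modz p n.+1 - p) + (modz p' n.+1 - p') + (p' - Posz (Gnat n g qm))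
   + (Posz (Gnat n g qm) + Posz qm - Posz g) - (modz q n.+1 - q))%R.
  by rewrite eq; ring.
apply: rpredB; last exact: dvd_mod.
apply: rpredD; last exact: hG.
apply: rpredD; last exact: hpd.
by apply: rpredD; exact: dvd_mod.
Qed.
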